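(* For positive integers $b,c$ with $1\le b<b+2\le c$, $$\frac{c+1}{c-b}\le\sum_{t=0}^\infty\frac{(b+t)!\,c!}{(c+t)!\,b!}\le\frac{c+1}{c-b}\bigl(1+\varepsilon(c-b)\bigr),$$ where $\varepsilon(a)=3\,\dfrac{1+\ln a}{a}+4e^{1/12}\,2^{-a/2}$. *)

(* Defs.v *)
From Stdlib Require Import Reals Arith Factorial.
From Coquelicot Require Import Coquelicot.
Open Scope R_scope.

Definition term (b c t : nat) : R :=
  (INR (fact (b + t)) * INR (fact c)) / (INR (fact (c + t)) * INR (fact b)).

Definition eps (a : R) : R :=
  3 * (1 + ln a) / a + 4 * exp (1 / 12) * Rpower 2 (- a / 2).

(* Main.v *)
Require Import Defs.
From Stdlib Require Import Reals Lra Lia Arith Factorial.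
From Coquelicot Require Import Coquelicot.
Open Scope R_scope.

Lemma term_pos b c t : 0 < term b c t.
Proof.
  unfold term. apply Rdiv_lt_0_compat; apply Rmult_lt_0_compat;
  apply lt_0_INR; apply lt_O_fact.
Qed.

Lemma term_S b c t :
  term b c (S t) = term b c t * INR (b + t + 1) / INR (c + t + 1).
Proof.
  unfold term. rewrite !Nat.add_succ_r.
  replace (b+t+1)%nat with (S (b+t)) by lia. replace (c+t+1)%nat with (S (c+t)) by lia.
  change (fact (S (b + t))) with (S (b+t) * fact (b+t))%nat.
  change (fact (S (c + t))) with (S (c+t) * fact (c+t))%nat.
  rewrite !mult_INR.
  pose proof (INR_fact_neq_0 (c+t)). pose proof (INR_fact_neq_0 b).
  assert (INR (S (c+t)) <> 0) by (apply not_0_INR; lia).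
  rewrite !Nat.add_0_r. field. auto.
Qed.

Definition w b c t := term b c t * INR (c + t).

Lemma w_step b c t (h : (b + 2 <= c)%nat) :
  (INR c - INR b - 1) * term b c t = w b c t - w b c (S t).
Proof.
  unfold w. rewrite term_S.
  assert (INR (c + S t) = INR (c+t+1)) by (f_equal; lia).
  rewrite H. assert (INR (c+t+1) <> 0) by (apply not_0_INR; lia).
  rewrite !plus_INR. simpl. field. rewrite <- !plus_INR. simpl. 
  replace (INR (c+t) + 1) with (INR (c+t+1)) by (rewrite !plus_INR; simpl; ring). auto.
Qed.

Lemma w0 b c : w b c 0 = INR c.
Proof.
  unfold w, term. rewrite !Nat.add_0_r. pose proof (INR_fact_neq_0 c).
  pose proof (INR_fact_neq_0 b). field. auto.
Qed.

Lemma w_bound b c n (h : (b + 2 <= c)%nat) :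
  0 < w b c n <= INR c * INR (b + 1) / INR (b + n + 1).
Proof.
  induction n.
  - rewrite w0. split. apply lt_0_INR; lia. rewrite Nat.add_0_r.
    assert (0 < INR (b+1)) by (apply lt_0_INR; lia). right; field; lra.
  - assert (Hw : w b c (S n) = w b c n * INR (b+n+1) / INR (c+n)).
    { unfold w. rewrite term_S. replace (c + S n)%nat with (c+n+1)%nat by lia.
      assert (0 < INR (c+n)) by (apply lt_0_INR; lia).
      assert (0 < INR (c+n+1)) by (apply lt_0_INR; lia). field; lra. }
    rewrite Hw. destruct IHn as [H1 H2].
    assert (0 < INR (c+n)) by (apply lt_0_INR; lia).
    assert (0 < INR (b+n+1)) by (apply lt_0_INR; lia).
    assert (0 < INR (b+S n+1)) by (apply lt_0_INR; lia).
    assert (INR (b + S n + 1) <= INR (c+n)) by (apply le_INR; lia).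
    assert (0 <= INR c * INR (b+1)) by (apply Rmult_le_pos; apply pos_INR).
    split.
    + apply Rdiv_lt_0_compat; [apply Rmult_lt_0_compat|]; lra.
    + apply Rle_trans with (INR c * INR (b+1) / INR (b+n+1) * INR (b+n+1) / INR (c+n)).
      * unfold Rdiv. apply Rmult_le_compat_r. left; apply Rinv_0_lt_compat; lra.
        apply Rmult_le_compat_r; lra.
      * replace (INR c * INR (b+1) / INR (b+n+1) * INR (b+n+1) / INR (c+n))
          with (INR c * INR (b+1) / INR (c+n)) by (field; lra).
        unfold Rdiv. apply Rmult_le_compat_l; auto.
        apply Rinv_le_contravar; lra.
Qed.

Lemma partial b c n (h : (b + 2 <= c)%nat) :
  (INR c - INR b - 1) * sum_n (term b c) n = INR c - w b c (S n).
Proof.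
  induction n.
  - rewrite sum_O, w_step by auto. rewrite w0. ring.
  - rewrite sum_Sn. unfold plus; simpl. rewrite Rmult_plus_distr_l, IHn, w_step by auto. ring.
Qed.

Lemma w_lim b c (h : (b + 2 <= c)%nat) : is_lim_seq (fun n => w b c (S n)) 0.
Proof.
  apply is_lim_seq_le_le with (u := fun _ => 0)
    (w := fun n => INR c * INR (b+1) * / INR (b + S n + 1)).
  - intro n. destruct (w_bound b c (S n) h). split; [lra|]. exact H0.
  - apply is_lim_seq_const.
  - replace (Finite 0) with (Rbar_mult (INR c * INR (b+1)) 0) by (simpl; f_equal; ring).
    apply is_lim_seq_scal_l.
    replace (Finite 0) with (Rbar_inv p_infty) by reflexivity.
    apply is_lim_seq_inv; [|discriminate].
    pose proof is_lim_seq_INR as HI.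
    apply is_lim_seq_incr_n with (N := (b + 2)%nat) in HI.
    eapply is_lim_seq_ext; [|exact HI].
    intro n; simpl. f_equal; lia.
Qed.

Lemma series_val b c (h : (b + 2 <= c)%nat) :
  is_series (term b c) (INR c / (INR c - INR b - 1)).
Proof.
  assert (hd : 1 <= INR c - INR b - 1).
  { assert (INR (b+2) <= INR c) by (apply le_INR; lia). rewrite plus_INR in H. simpl in H. lra. }
  change (is_lim_seq (sum_n (term b c)) (INR c / (INR c - INR b - 1))).
  eapply is_lim_seq_ext.
  { intro n. symmetry. 
    replace (sum_n (term b c) n) with ((INR c - w b c (S n)) / (INR c - INR b - 1)).
    reflexivity. rewrite <- partial by auto. field. lra. }
  replace (Finite (INR c / (INR c - INR b - 1))) with
    (Rbar_mult (/ (INR c - INR b - 1)) (INR c - 0)) by (simpl; f_equal; field; lra).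
  eapply is_lim_seq_ext.
  { intro n. unfold Rdiv. rewrite Rmult_comm. reflexivity. }
  apply is_lim_seq_scal_l. apply is_lim_seq_minus'. apply is_lim_seq_const. apply w_lim; auto.
Qed.

Theorem lemma2 (b c : nat) (hb : (1 <= b)%nat) (hbc : (b + 2 <= c)%nat) :
  ex_series (term b c) /\
  (INR c + 1) / (INR c - INR b) <= Series (term b c) /\
  Series (term b c) <=
    (INR c + 1) / (INR c - INR b) * (1 + eps (INR c - INR b)).
Proof.
  pose proof (series_val b c hbc) as Hs.
  rewrite (is_series_unique _ _ Hs).
  assert (hb1 : 1 <= INR b) by (apply (le_INR 1); lia).
  assert (hd : 2 <= INR c - INR b).
  { assert (INR (b+2) <= INR c) by (apply le_INR; lia). rewrite plus_INR in H. simpl in H. lra. }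
  set (a := INR c - INR b) in *.
  assert (Hc : INR c = INR b + a) by (unfold a; ring).
  rewrite Hc. replace (INR b + a - INR b - 1) with (a - 1) by ring.
  split; [exists (INR c / (INR c - INR b - 1)); exact Hs|].
  split.
  - apply Rmult_le_reg_r with (a * (a - 1)); [nra|].
    replace ((INR b + a + 1) / a * (a * (a - 1))) with ((INR b + a + 1) * (a - 1)) by (field; lra).
    replace ((INR b + a) / (a - 1) * (a * (a - 1))) with ((INR b + a) * a) by (field; lra).
    nra.
  - assert (He : 1 <= (a - 1) * eps a).
    { unfold eps.
      assert (0 <= ln a) by (rewrite <- ln_1; apply ln_le; lra).
      assert (0 < 4 * exp (1/12) * Rpower 2 (- a / 2)).
      { apply Rmult_lt_0_compat; [apply Rmult_lt_0_compat; [lra| apply exp_pos]|].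
        unfold Rpower; apply exp_pos. }
      assert (3 * (1 + ln a) / a >= 3 / a).
      { unfold Rdiv. apply Rle_ge. apply Rmult_le_compat_r. left; apply Rinv_0_lt_compat; lra. lra. }
      assert ((a - 1) * (3 / a) >= 3/2).
      { apply Rle_ge. apply Rmult_le_reg_r with a; [lra|].
        replace ((a - 1) * (3 / a) * a) with (3 * (a - 1)) by (field; lra). lra. }
      nra. }
    set (e := eps a) in *.
    apply Rmult_le_reg_r with (a * (a - 1)); [nra|].
    replace ((INR b + a) / (a - 1) * (a * (a - 1))) with ((INR b + a) * a) by (field; lra).
    replace ((INR b + a + 1) / a * (1 + e) * (a * (a - 1)))
      with ((INR b + a + 1) * (a - 1) + (INR b + a + 1) * ((a - 1) * e)) by (field; lra).
    nra.
Qed.
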